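(* Let $E$ be a real topological vector space, $\Omega$ a nonempty open subset of $E$, and $f_0,\dots,f_m:\Omega\to\mathbb{R}$. Let $\hat{x}$ be a solution of the problem $(\mathcal{Q}_1)$: minimize $f_0(x)$ subject to $x\in\Omega$ and $f_i(x)\le0$ for all $i\in\{1,\dots,m\}$. Assume that $F=(f_0,f_1,\dots,f_m)$ is $D^+_M$-pseudoconvex at $\hat{x}$ and that $f_j$ is upper semicontinuous at $\hat{x}$ for every $j\in\{1,\dots,m\}$ with $f_j(\hat{x})<0$. Then there exists a nonzero $(\lambda^0,\dots,\lambda^m)\in\mathbb{R}^{m+1}$ such that (a) $\lambda^i\ge0$ for $i=0,\dots,m$; (b) $\lambda^if_i(\hat{x})=0$ for $i=1,\dots,m$; (c) with $f=\sum_{i=0}^m\lambda^if_i$, for every $x\in\Omega$ we have $\lambda^0f_0(\hat{x})=f(\hat{x})\le f(x)$.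
   Context: $D^+f(x)(u):=\limsup_{t\to0^+}\frac{f(x+tu)-f(x)}{t}$ (with $D^+f(x)(0)=0$), $D^+_Mf(x)(u):=\sup_{w\in E}\{D^+f(x)(u+w)-D^+f(x)(w)\}$; $f$ is $D^+_M$-differentiable at $x$ if both are finite for all $u\in E$. A map $F=(f_0,\dots,f_m):\Omega\to\mathbb{R}^{m+1}$ is $D^+_M$-differentiable at $\hat{x}$ if each $f_i$ is, and then $D^+_MF(\hat{x}):=(D^+_Mf_0(\hat{x}),\dots,D^+_Mf_m(\hat{x}))$. $F$ is $D^+_M$-pseudoconvex at $\hat{x}$ if it is $D^+_M$-differentiable at $\hat{x}$ and for every $x\in\Omega$ there exists $\eta=\eta(x,\hat{x})\in E$ such that for all $w\in(\mathbb{R}_+)^{m+1}$: $\langle w,D^+_MF(\hat{x})(\eta)\rangle\ge0\implies\langle w,F(x)-F(\hat{x})\rangle\ge0$. *)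

(* Defs.v *)
From HB Require Import structures.
From mathcomp Require Import all_boot all_order all_algebra.
From mathcomp Require Import all_classical all_reals all_analysis.
Set Implicit Arguments. Unset Strict Implicit. Unset Printing Implicit Defensive.
Import Order.TTheory GRing.Theory Num.Theory.
Local Open Scope classical_set_scope.
Local Open Scope ring_scope.

Section Dini.
Variables (R : realType) (E : topologicalLmodType R).

(* upper Dini derivative D^+f(x)(u) = limsup_{t -> 0+} (f(x+tu)-f(x))/t,
   with limsup_{t->0+} g(t) := inf_{delta>0} sup_{0<t<delta} g(t) in \bar R *)
Definition Dplus (f : E -> R) (x u : E) : \bar R :=
  ereal_inf [set ereal_sup [set ((f (x + t *: u) - f x) / t)%:E | t in `]0, d[]
            | d in `]0, +oo[].

Definition DMplus (f : E -> R) (x u : E) : \bar R :=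
  ereal_sup [set (Dplus f x (u + w)%R - Dplus f x w)%E | w in [set: E]].

Definition DM_differentiable (f : E -> R) (x : E) : Prop :=
  forall u : E, Dplus f x u \is a fin_num /\ DMplus f x u \is a fin_num.

Definition DM_pseudoconvex (m : nat) (F : 'I_m.+1 -> E -> R) (Omega : set E)
    (xhat : E) : Prop :=
  (forall i, DM_differentiable (F i) xhat) /\
  forall x, Omega x -> exists eta : E, forall w : 'I_m.+1 -> R,
    (forall i, 0 <= w i) ->
    0 <= \sum_(i < m.+1) w i * fine (DMplus (F i) xhat eta) ->
    0 <= \sum_(i < m.+1) w i * (F i x - F i xhat).

Definition usc_at (f : E -> R) (x : E) : Prop :=
  forall e : R, 0 < e -> \forall y \near x, f y < f x + e.

Definition solves_Q1 (m : nat) (F : 'I_m.+1 -> E -> R) (Omega : set E)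
    (xhat : E) : Prop :=
  [/\ Omega xhat, (forall i : 'I_m.+1, i != ord0 -> F i xhat <= 0) &
      forall x, Omega x -> (forall i : 'I_m.+1, i != ord0 -> F i x <= 0) ->
        F ord0 xhat <= F ord0 x].
End Dini.

(* Main.v *)
Require Import Defs.
From HB Require Import structures.
From mathcomp Require Import all_boot all_order all_algebra.
From mathcomp Require Import all_classical all_reals all_analysis.
From mathcomp Require Import ring lra.
Import Order.TTheory GRing.Theory Num.Theory.
Local Open Scope classical_set_scope.
Local Open Scope ring_scope.


Section Gordan.
Variables (R : realType) (E : lmodType R).

Definition sublin (p : E -> R) :=
  (forall u v, p (u + v) <= p u + p v) /\
  (forall (s : R) u, 0 < s -> p (s *: u) <= s * p u).

Lemma sublin_comb p a b u v : sublin p -> 0 < a -> 0 < b ->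
  p (a *: u + b *: v) <= a * p u + b * p v.
Proof.
case=> Hs Hh Ha Hb; apply: le_trans (Hs _ _) _.
by apply: lerD; apply: Hh.
Qed.

Lemma real_key (P Q P' Q' : R) : 0 < P -> Q < 0 -> P' < 0 -> 0 < Q' ->
  (forall a b, 0 < a -> 0 < b -> 0 <= Num.max (a * P' + b * P) (a * Q' + b * Q)) ->
  Q * P' <= P * Q'.
Proof.
move=> HP HQ HP' HQ' H; rewrite leNgt; apply/negP => Hc.
pose c := Q * P' - P * Q'.
have Hc0 : 0 < c by rewrite /c subr_gt0.
pose d := c / (Q' + 1).
have Hd : 0 < d by rewrite /d divr_gt0 // ltr_wpDl ?ltW.
have HdQ : d * Q' < c.
  rewrite /d mulrAC ltr_pdivrMr ?ltr_wpDl ?ltW //.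
  by rewrite ltr_pM2l // ltrDl.
have HP'' : 0 < - P' by rewrite oppr_gt0.
have := H (P + d) (- P') (ltr_wpDl (ltW HP) Hd) HP''.
have H1 : (P + d) * P' + (- P') * P < 0.
  by rewrite mulrDl mulNr addrAC mulrC subrr add0r mulrC pmulr_llt0.
have H2 : (P + d) * Q' + (- P') * Q < 0.
  by rewrite /c in HdQ; lra.
by rewrite le_max !leNgt H1 H2.
Qed.

Lemma strict_pos p q : sublin p -> sublin q ->
  (forall e, 0 <= Num.max (p e) (q e)) -> (exists e1, q e1 < 0) ->
  forall e, p e < 0 -> 0 < q e.
Proof.
move=> Sp Sq H [e1 He1] e He; rewrite ltNge; apply/negP => Hq.
pose eps := - p e / (`|p e1| + 1).
have Hn : 0 < `|p e1| + 1 by rewrite ltr_wpDl.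
have Heps : 0 < eps by rewrite /eps divr_gt0 // oppr_gt0.
have Hle : eps * p e1 < - p e.
  apply: (le_lt_trans (y := eps * `|p e1|)).
    by rewrite ler_pM2l // ler_norm.
  rewrite /eps mulrAC ltr_pdivrMr // ltr_pM2l ?oppr_gt0 //.
  by rewrite ltrDl.
have := H (1 *: e + eps *: e1).
have := sublin_comb _ _ _ e e1 Sp ltr01 Heps.
have := sublin_comb _ _ _ e e1 Sq ltr01 Heps.
rewrite !mul1r => Hb1 Hb2 Hm.
have H1 : q e + eps * q e1 < 0 by nra.
have H2 : p e + eps * p e1 < 0 by lra.
move: Hm; rewrite le_max !leNgt.
by rewrite (le_lt_trans Hb1 H1) (le_lt_trans Hb2 H2).
Qed.

Lemma two p q : sublin p -> sublin q ->
  (forall e, 0 <= Num.max (p e) (q e)) ->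
  exists a, 0 <= a <= 1 /\ forall e, 0 <= a * p e + (1 - a) * q e.
Proof.
move=> Sp Sq H.
have [Hp|Hp] := pselect (forall e, 0 <= p e).
  by exists 1; split; [by rewrite ler01 lexx | move=> e; have := Hp e; lra].
have [Hq|Hq] := pselect (forall e, 0 <= q e).
  by exists 0; split; [by rewrite lexx ler01 | move=> e; have := Hq e; lra].
have [e0 He0] : exists e0, p e0 < 0.
  by apply: contra_notP Hp => Hn e; rewrite leNgt; apply/negP => ?; apply: Hn; exists e.
have [e1 He1] : exists e1, q e1 < 0.
  by apply: contra_notP Hq => Hn e; rewrite leNgt; apply/negP => ?; apply: Hn; exists e.
have H' : forall e, 0 <= Num.max (q e) (p e) by move=> e; rewrite maxC.
have Pq := strict_pos _ _ Sp Sq H (ex_intro _ e1 He1).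
have Pp := strict_pos _ _ Sq Sp H' (ex_intro _ e0 He0).
pose S := [set - q e / p e | e in [set e | q e < 0]].
have key : forall e e', q e < 0 -> p e' < 0 -> - q e / p e <= q e' / (- p e').
  move=> e e' Hqe Hpe'.
  have Hpe := Pp _ Hqe; have Hqe' := Pq _ Hpe'.
  have Hk := real_key _ _ _ _ Hpe Hqe Hpe' Hqe'.
  have : q e * p e' <= p e * q e'.
    apply: Hk => a b Ha Hb.
    have := H (a *: e' + b *: e).
    have := sublin_comb _ _ _ e' e Sp Ha Hb.
    have := sublin_comb _ _ _ e' e Sq Ha Hb.
    rewrite !le_max => h1 h2 /orP[h|h]; apply/orP.
      by left; apply: le_trans h h2.
    by right; apply: le_trans h h1.
  move=> Hk'.
  rewrite ler_pdivrMr // mulrAC ler_pdivlMr ?oppr_gt0 //.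
  nra.
have hS : has_sup S.
  split; first by exists (- q e1 / p e1), e1.
  exists (q e0 / (- p e0)) => _ [e /= He <-]; exact: key.
pose s := sup S.
have s_ub : forall e, q e < 0 -> - q e / p e <= s.
  by move=> e He; apply: sup_upper_bound => //; exists e.
have s_lb : forall e, p e < 0 -> s <= q e / (- p e).
  move=> e He; apply: ge_sup; first by exists (- q e1 / p e1), e1.
  by move=> _ [e' /= He' <-]; exact: key.
have s_pos : 0 < s.
  apply: lt_le_trans (s_ub _ He1).
  by rewrite divr_gt0 ?oppr_gt0 // Pp.
have Hs1 : 0 < 1 + s by rewrite ltr_wpDl.
exists (s / (1 + s)); split.
  rewrite divr_ge0 ?ltW //= ltr_pdivrMr // mul1r; lra.
move=> e.
have -> : s / (1 + s) * p e + (1 - s / (1 + s)) * q e = (s * p e + q e) / (1 + s).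
  by field; rewrite gt_eqF.
apply: divr_ge0; last exact: ltW.
have [Hpe|Hpe] := ltP (p e) 0.
  have := s_lb _ Hpe; rewrite ler_pdivlMr ?oppr_gt0 //; lra.
have [Hqe|Hqe] := ltP (q e) 0.
  have := s_ub _ Hqe; rewrite ler_pdivrMr ?Pp //; lra.
nra.
Qed.

Lemma sublin_max p q : sublin p -> sublin q -> sublin (fun e => Num.max (p e) (q e)).
Proof.
move=> [Sp Hp] [Sq Hq]; split.
  move=> u v; rewrite ge_max; apply/andP; split.
    apply: le_trans (Sp u v) _; apply: lerD; rewrite le_max lexx //.
  apply: le_trans (Sq u v) _; apply: lerD; rewrite le_max lexx ?orbT //.
move=> s u Hs; rewrite ge_max; apply/andP; split.
  apply: le_trans (Hp s u Hs) _; apply: ler_wpM2l; [exact: ltW | by rewrite le_max lexx].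
apply: le_trans (Hq s u Hs) _; apply: ler_wpM2l; [exact: ltW | by rewrite le_max lexx orbT].
Qed.

Fixpoint gmax (g : nat -> E -> R) (n : nat) (e : E) : R :=
  match n with 0%N => g 0%N e | n'.+1 => Num.max (gmax g n' e) (g n e) end.

Lemma gmax_sublin g n : (forall i, sublin (g i)) -> sublin (gmax g n).
Proof.
move=> Hg; elim: n => [|n IH] //=.
exact: (sublin_max _ _ IH (Hg n.+1)).
Qed.

Lemma gmax_ge g n i e : (i <= n)%N -> g i e <= gmax g n e.
Proof.
elim: n => [|n IH] /=; first by rewrite leqn0 => /eqP ->.
rewrite leq_eqVlt => /orP[/eqP ->|Hi]; rewrite le_max ?lexx ?orbT //.
by rewrite IH.
Qed.

Lemma gmax_att g n e : exists2 i, (i <= n)%N & gmax g n e = g i e.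
Proof.
elim: n => [|n [i Hi IH]] /=; first by exists 0%N.
have [H|H] := leP (gmax g n e) (g n.+1 e).
  by exists n.+1.
by exists i; [exact: leqW|].
Qed.

Lemma gordan n : forall g : nat -> E -> R, (forall i, sublin (g i)) ->
  (forall e, exists2 i, (i <= n)%N & 0 <= g i e) ->
  exists lam : nat -> R, (forall i, 0 <= lam i) /\
    (\sum_(i < n.+1) lam i = 1) /\
    (forall e, 0 <= \sum_(i < n.+1) lam i * g i e).
Proof.
elim: n => [|n IH] g Sg Hg.
  exists (fun _ => 1); split => [i|]; first exact: ler01.
  split; first by rewrite big_ord1.
  move=> e; rewrite big_ord1 mul1r.
  by have [i] := Hg e; rewrite leqn0 => /eqP ->.
have Hm : forall e, 0 <= Num.max (gmax g n e) (g n.+1 e).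
  move=> e; have [i Hi H0] := Hg e.
  rewrite leq_eqVlt in Hi; case/orP: Hi => [/eqP Ei|Hi].
    by rewrite le_max -Ei H0 orbT.
  by rewrite le_max (le_trans H0 (gmax_ge g n i e Hi)).
have [a [/andP[Ha0 Ha1] Ha]] := two _ _ (gmax_sublin g n Sg) (Sg n.+1) Hm.
pose k i e := a * g i e + (1 - a) * g n.+1 e.
have Sk : forall i, sublin (k i).
  move=> i; have [S1 H1] := Sg i; have [S2 H2] := Sg n.+1; split.
    move=> u v; rewrite /k.
    have := S1 u v; have := S2 u v.
    have : 0 <= 1 - a by rewrite subr_ge0.
    move=> h0 h1 h2.
    have := ler_wpM2l Ha0 h2; have := ler_wpM2l h0 h1; lra.
  move=> s u Hs; rewrite /k.
  have := H1 s u Hs; have := H2 s u Hs.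
  have : 0 <= 1 - a by rewrite subr_ge0.
  move=> h0 h1 h2.
  have := ler_wpM2l Ha0 h2; have := ler_wpM2l h0 h1; lra.
have Hk : forall e, exists2 i, (i <= n)%N & 0 <= k i e.
  move=> e; have [i Hi Hi'] := gmax_att g n e.
  by exists i => //; rewrite /k -Hi'; exact: Ha.
have [b [Hb0 [Hb1 Hb]]] := IH k Sk Hk.
exists (fun i => if (i <= n)%N then a * b i else 1 - a); split.
  by move=> i; case: ifP => _; [exact: mulr_ge0 | rewrite subr_ge0].
split.
  rewrite big_ord_recr /= ltnn.
  rewrite (eq_bigr (fun i : 'I_n.+1 => a * b i)); last by move=> i _; rewrite -ltnS ltn_ord.
  by rewrite -mulr_sumr Hb1 mulr1 addrC subrK.
move=> e; rewrite big_ord_recr /= ltnn.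
rewrite (eq_bigr (fun i : 'I_n.+1 => a * b i * g i e)); last by move=> i _; rewrite -ltnS ltn_ord.
have Hbe := Hb e.
have : \sum_(i < n.+1) b i * k i e =
   \sum_(i < n.+1) a * b i * g i e + \sum_(i < n.+1) b i * ((1 - a) * g n.+1 e).
  by rewrite -big_split; apply: eq_bigr => i _ /=; rewrite /k; ring.
rewrite -mulr_suml Hb1 mul1r; lra.
Qed.
End Gordan.

Arguments sublin {R E}. Arguments gordan {R E}.

Section Dini2.
Variables (R : realType) (E : topologicalLmodType R) (f : E -> R) (x : E).
Hypothesis Hd : DM_differentiable f x.
Definition Sup (v : E) (d : R) : \bar R :=
  ereal_sup [set ((f (x + t *: v) - f x) / t)%:E | t in `]0, d[].
Lemma DplusE v : Dplus f x v = ereal_inf [set Sup v d | d in `]0, +oo[].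
Proof. by []. Qed.
Definition Dr u := fine (Dplus f x u).
Definition hr u := fine (DMplus f x u).
Lemma DE u : Dplus f x u = (Dr u)%:E.
Proof. by rewrite /Dr fineK //; case: (Hd u). Qed.

Lemma h_ub u w : Dr (u + w) - Dr w <= hr u.
Proof.
rewrite -lee_fin /hr fineK; last by case: (Hd u).
rewrite EFinB -!DE; apply: ereal_sup_ubound; by exists w.
Qed.

Lemma h_lub u c : (forall w, Dr (u + w) - Dr w <= c) -> hr u <= c.
Proof.
move=> H; rewrite -lee_fin /hr fineK; last by case: (Hd u).
by apply: ub_ereal_sup => _ [w _ <-]; rewrite !DE -EFinB lee_fin.
Qed.

Lemma D_scale s u : 0 < s -> Dr (s *: u) <= s * Dr u.
Proof.
move=> Hs.
have Hsi : 0 < s^-1 by rewrite invr_gt0.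
rewrite -(ler_pM2l Hsi).
rewrite mulrA mulVf ?gt_eqF // mul1r -lee_fin -DE DplusE.
apply: le_ereal_inf_tmp => _ [d Hd0 <-].
have Hd0' : 0 < d by move: Hd0; rewrite /= in_itv /= andbT.
have H1 : ((Dr (s *: u))%:E <= Sup (s *: u) (d / s)%R)%E.
  rewrite -DE; apply: ereal_inf_lbound; exists (d / s) => //=.
  by rewrite in_itv /= andbT divr_gt0.
have H2 : (Sup (s *: u) (d / s)%R
   <= s%:E * Sup u d)%E.
  apply: ub_ereal_sup => _ [t Ht <-].
  move: Ht; rewrite /= in_itv /= => /andP[Ht0 Ht1].
  rewrite scalerA.
  have -> : (f (x + (t * s) *: u) - f x) / t = s * ((f (x + (t * s) *: u) - f x) / (t * s)).
    by field; rewrite !gt_eqF.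
  rewrite EFinM; apply: lee_wpmul2l; first by rewrite lee_fin ltW.
  apply: ereal_sup_ubound; exists (t * s) => //=.
  rewrite in_itv /= mulr_gt0 //= -ltr_pdivlMr //.
move: (le_trans H1 H2); move: (Sup u d) => Y.
case: Y => [r||] H.
- rewrite -EFinM lee_fin in H; rewrite lee_fin -(ler_pM2l Hs) mulrA divff ?gt_eqF // mul1r //.
- by rewrite leey.
- by move: H; rewrite mulrNy gtr0_sg // mul1e.
Qed.

Lemma D0 : Dr 0 <= 0.
Proof.
rewrite -lee_fin -DE DplusE.
apply: (@le_trans _ _ (Sup 0 1)).
  by apply: ereal_inf_lbound; exists 1 => //=; rewrite in_itv /= andbT.
apply: ub_ereal_sup => _ [t _ <-].
by rewrite scaler0 addr0 subrr mul0r.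
Qed.

Lemma D_le_h u : Dr u <= hr u.
Proof. have := h_ub u 0; rewrite addr0; have := D0; lra. Qed.

Lemma h_sublin : sublin hr.
Proof.
split.
  move=> u v; apply: h_lub => w.
  have := h_ub u (v + w); have := h_ub v w; rewrite addrA; lra.
move=> s u Hs; apply: h_lub => w.
pose w' := s^-1 *: w.
have Ew : w = s *: w' by rewrite /w' scalerA divff ?gt_eqF // scale1r.
have Hsi : 0 < s^-1 by rewrite invr_gt0.
have H1 := D_scale s (u + w') Hs.
have H2 := D_scale s^-1 w Hsi.
have H3 := h_ub u w'.
have -> : s *: u + w = s *: (u + w') by rewrite scalerDr -Ew.
rewrite -/w' in H2.
have H4 : s * Dr w' <= Dr w.
  by rewrite -(ler_pM2l Hsi) mulrA mulVf ?gt_eqF // mul1r.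
have H5 : s * (Dr (u + w') - Dr w') <= s * hr u by rewrite ler_pM2l.
lra.
Qed.

Lemma descent u : Dr u < 0 ->
  exists2 d, 0 < d & forall t, 0 < t < d -> f (x + t *: u) < f x.
Proof.
move=> H.
have : (Dplus f x u < 0%:E)%E by rewrite DE lte_fin.
rewrite DplusE => /ereal_inf_lt [_ [d Hd0 <-] Hlt].
exists d; first by move: Hd0; rewrite /= in_itv /= andbT.
move=> t /andP[Ht0 Ht1].
have : (((f (x + t *: u) - f x) / t)%:E <= Sup u d)%E.
  by apply: ereal_sup_ubound; exists t => //=; rewrite in_itv /= Ht0 Ht1.
move=> /le_lt_trans /(_ Hlt); rewrite lte_fin pmulr_llt0 ?invr_gt0 //.
by rewrite subr_lt0.
Qed.
End Dini2.
Arguments Dr {R E}. Arguments hr {R E}. Arguments h_sublin {R E f x}.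
Arguments D_le_h {R E f x}. Arguments descent {R E f x}.
Arguments DE {R E f x}.

Lemma cont (R : realType) (E : topologicalLmodType R) (a e : E) :
  (fun t : R => a + t *: e) @ 0^'+ --> a.
Proof.
have c1 : (fun t : R^o => (t, e)) @ (0:R^o) --> ((0:R^o), e).
  apply: (@cvg_pair _ _ _ _ (nbhs (0:R^o)) (nbhs e)); [exact: cvg_id | exact: cvg_cst].
have c2 : (fun t : R^o => t *: e) @ (0:R^o) --> 0 *: e.
  exact: (cvg_comp (fun t : R^o => (t, e)) (fun z : R^o * E => z.1 *: z.2) c1 (@scale_continuous R E (0, e))).
rewrite scale0r in c2.
have c3 : (fun t : R^o => (a, t *: e)) @ (0:R^o) --> (a, 0).
  apply: (@cvg_pair _ _ _ _ (nbhs a) (nbhs (0:E))); [exact: cvg_cst | exact: c2].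
have c4 : (fun t : R^o => a + t *: e) @ (0:R^o) --> a + 0.
  exact: (cvg_comp (fun t : R^o => (a, t *: e)) (fun z : E * E => z.1 + z.2) c3 (@add_continuous E (a, 0))).
rewrite addr0 in c4.
exact: cvg_within_filter c4.
Qed.

Theorem corollary3p9 (R : realType) (E : topologicalLmodType R) (m : nat)
    (Omega : set E) (F : 'I_m.+1 -> E -> R) (xhat : E) :
  open Omega -> Omega !=set0 ->
  solves_Q1 F Omega xhat ->
  DM_pseudoconvex F Omega xhat ->
  (forall j : 'I_m.+1, j != ord0 -> F j xhat < 0 -> usc_at (F j) xhat) ->
  exists lam : 'I_m.+1 -> R,
    (exists i, lam i != 0) /\
    (forall i, 0 <= lam i) /\
    (forall i : 'I_m.+1, i != ord0 -> lam i * F i xhat = 0) /\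
    (lam ord0 * F ord0 xhat = \sum_(i < m.+1) lam i * F i xhat /\
     forall x, Omega x ->
       \sum_(i < m.+1) lam i * F i xhat <= \sum_(i < m.+1) lam i * F i x).
Proof.
move=> Hopen _ [HO Hfeas Hopt] [Hdiff Hpc] Husc.
pose h (i : 'I_m.+1) := hr (F i) xhat.
pose act (i : 'I_m.+1) := (i == ord0) || (F i xhat == 0).
pose g (k : nat) := if act (inord k) then h (inord k) else h ord0.
have Sg : forall k, sublin (g k).
  by move=> k; rewrite /g; case: ifP => _; apply: h_sublin.
have Hg : forall e, exists2 k, (k <= m)%N & 0 <= g k e.
  move=> e; apply: contrapT => Hn.
  have Hneg : forall i, act i -> h i e < 0.
    move=> i Ai; rewrite ltNge; apply/negP => H0; apply: Hn; exists (val i).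
      by rewrite -ltnS ltn_ord.
    by rewrite /g inord_val Ai.
  have N1 : \forall t \near 0^'+, forall i, act i -> F i (xhat + t *: e) < F i xhat.
    apply: filter_forall => i.
    have [Ai|Ai] := boolP (act i); last by apply: nearW.
    have [d Hd0 Hdesc] := descent (Hdiff i) e (le_lt_trans (D_le_h (Hdiff i) e) (Hneg i Ai)).
    near=> t => _; apply: Hdesc; apply/andP; split; near: t.
      exact: nbhs_right_gt.
    exact: nbhs_right_lt.
  have N2 : \forall y \near xhat, Omega y /\ forall i, i != ord0 -> F i xhat < 0 -> F i y < 0.
    near=> y; split.
      near: y; by move: Hopen; rewrite openE => /(_ _ HO).
    near: y; apply: filter_forall => i.
    have [Hi|Hi] := boolP (i != ord0); last by apply: nearW.
    have [Hl|Hl] := boolP (F i xhat < 0); last by apply: nearW.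
    have Hp : 0 < - F i xhat by rewrite oppr_gt0.
    apply: filterS (Husc i Hi Hl _ Hp) => y; rewrite subrr => Hy _ _; exact: Hy.
  have N3 := cont _ _ xhat e _ N2.
  have : \forall t \near 0^'+, 0 < t /\ (forall i, act i -> F i (xhat + t *: e) < F i xhat)
     /\ (Omega (xhat + t *: e) /\ forall i, i != ord0 -> F i xhat < 0 -> F i (xhat + t *: e) < 0).
    near=> t; split; [|split]; near: t.
    - exact: nbhs_right_gt.
    - exact: N1.
    - exact: N3.
  case/filter_ex => t [Ht [H1 [HOt H2]]].
  have Hf : forall i, i != ord0 -> F i (xhat + t *: e) <= 0.
    move=> i Hi; have [Hz|Hnz] := eqVneq (F i xhat) 0.
      have Ai : act i by rewrite /act Hz eqxx orbT.
      by have := H1 i Ai; rewrite Hz => /ltW.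
    have Hlt : F i xhat < 0 by rewrite lt_neqAle Hnz Hfeas.
    exact: ltW (H2 i Hi Hlt).
  have := Hopt _ HOt Hf.
  have := H1 ord0 (introT orP (or_introl (eqxx _))).
  by move=> h1 h2; move: (lt_le_trans h1 h2); rewrite ltxx.
have [lamn [Hl0 [Hl1 Hl2]]] := gordan m g Sg Hg.
pose c := \sum_(i < m.+1) (if act i then 0 else lamn i).
pose lam (i : 'I_m.+1) := (if act i then lamn i else 0) + (if i == ord0 then c else 0).
have c_ge0 : 0 <= c by apply: sumr_ge0 => i _; case: ifP.
have lam_ge0 : forall i, 0 <= lam i.
  by move=> i; rewrite /lam; apply: addr_ge0; case: ifP.
have Hsum0 : forall (u : 'I_m.+1 -> R),
    \sum_(i < m.+1) (if i == ord0 then u i else 0) = u ord0.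
  move=> u; rewrite big_ord_recl eqxx big1 ?addr0 // => i _.
have lam_sum : \sum_(i < m.+1) lam i = 1.
  rewrite /lam big_split /= (Hsum0 (fun _ => c)) /c -big_split /= -Hl1.
  by apply: eq_bigr => i _; case: ifP; rewrite ?addr0 ?add0r.
have key : forall e, \sum_(i < m.+1) lam i * h i e = \sum_(i < m.+1) lamn i * g i e.
  move=> e.
  have -> : \sum_(i < m.+1) lam i * h i e =
      \sum_(i < m.+1) ((if act i then lamn i * h i e else 0) +
                      (if i == ord0 then c * h i e else 0)).
    by apply: eq_bigr => i _; rewrite /lam mulrDl; case: ifP; case: ifP; rewrite ?mul0r.
  rewrite big_split /= (Hsum0 (fun i => c * h i e)) /c mulr_suml -big_split /=.
  apply: eq_bigr => i _; rewrite /g inord_val.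
  by case: ifP => _; rewrite ?mul0r ?addr0 ?add0r.
have Hb : forall i : 'I_m.+1, i != ord0 -> lam i * F i xhat = 0.
  move=> i Hi; rewrite /lam (negbTE Hi) addr0.
  case: ifP => Ai; last by rewrite mul0r.
  by move: Ai; rewrite /act (negbTE Hi) /= => /eqP ->; rewrite mulr0.
exists lam; split.
  apply: contrapT => Hn.
  have : \sum_(i < m.+1) lam i = 0.
    apply: big1 => i _; apply/eqP/negPn/negP => hh; apply: Hn; by exists i.
  by rewrite lam_sum => /eqP; rewrite oner_eq0.
split; first exact: lam_ge0.
split; first exact: Hb.
split.
  rewrite big_ord_recl big1 ?addr0 // => i _; apply: Hb.
  by rewrite eq_sym neq_lift.
move=> x Hx; have [eta Heta] := Hpc x Hx.
have := Heta lam lam_ge0.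
have H0 : 0 <= \sum_(i < m.+1) lam i * h i eta by rewrite key; exact: Hl2.
move=> /(_ H0).
under eq_bigr => i _ do rewrite mulrBr.
by rewrite sumrB subr_ge0.
Unshelve. all: by end_near.
Qed.
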